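(* Let $n\geq4$ and let $U,V$ be monomials. Then $U,V\in F(J(P_{n-2})^2)$ if and only if $x_{n-1}^2U,\,x_{n-1}^2V\in F(J(P_n)^2)$. Moreover, in that case $U>_{\mathcal R}V$ (rooted order on $F(J(P_{n-2})^2)$) if and only if $x_{n-1}^2U>_{\mathcal R}x_{n-1}^2V$ (rooted order on $F(J(P_n)^2)$).
   Context: Let $K$ be a field. For $m\geq 1$, $P_m$ is the path graph on vertices $x_1,\ldots,x_m$ with edges $\{x_i,x_{i+1}\}$. The cover ideal $J(P_m)$ is generated by the monomials $\prod_{x\in C}x$ with $C$ a minimal vertex cover of $P_m$. For a monomial ideal $I$, $G(I)$ is its set of minimal monomial generators and $F(I^2)=\{uv:u,v\in G(I)\}$. The rooted list $\mathcal R(P_m)$ is defined recursively: $\mathcal R(P_1)$ empty; $\mathcal R(P_2)=x_1,x_2$; $\mathcal R(P_3)=x_2,x_1x_3$; $\mathcal R(P_4)=x_1x_3,x_2x_3,x_2x_4$; for $m\geq5$, if $\mathcal R(P_{m-2})=u_1,\ldots,u_r$ and $\mathcal R(P_{m-3})=v_1,\ldots,v_s$, then $\mathcal R(P_m)=x_{m-1}u_1,\ldots,x_{m-1}u_r,x_mx_{m-2}v_1,\ldots,x_mx_{m-2}v_s$; it lists each element of $G(J(P_m))$ once. With $\mathcal R(P_m)=u_1,\ldots,u_q$, each $M\in F(J(P_m)^2)$ can be written $u_1^{a_1}\cdots u_q^{a_q}$ with $a_i\geq0$, $\sum a_i=2$; the maximal expression of $M$ is the one with lexicographically largest exponent vector.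 The rooted order on $F(J(P_m)^2)$: $M>_{\mathcal R}N$ iff the exponent vector of the maximal expression of $M$ is lexicographically larger than that of $N$. *)

(* Defs.v *)
From mathcomp Require Import all_boot.
Set Implicit Arguments. Unset Strict Implicit. Unset Printing Implicit Defensive.

(* A monomial in the variables x_1, x_2, ... is represented by its exponent
   function: (M i) is the exponent of x_i.  Index 0 is unused (a genuine
   monomial in x_1,x_2,... has M 0 = 0). *)
Definition mon := nat -> nat.

Definition is_monomial (M : mon) : Prop :=
  M 0 = 0 /\ exists N, forall i, N < i -> M i = 0.

Definition meq (M N : mon) : Prop := forall i, M i = N i.

Definition mone : mon := fun _ => 0.
Definition mmul (M N : mon) : mon := fun i => M i + N i.
Definition xv (k : nat) : mon := fun i => nat_of_bool (i == k).

(* Vertex covers of the path P_m on x_1..x_m, edges {x_i, x_{i+1}}. *)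
Definition in_range (m : nat) (C : nat -> bool) : Prop :=
  forall i, C i -> (1 <= i <= m).
Definition is_cover (m : nat) (C : nat -> bool) : Prop :=
  forall i, 1 <= i -> i < m -> C i || C i.+1.
Definition min_cover (m : nat) (C : nat -> bool) : Prop :=
  [/\ in_range m C, is_cover m C &
      forall C' : nat -> bool, in_range m C' -> is_cover m C' ->
        (forall i, C' i -> C i) -> forall i, C i -> C' i].

Definition cover_mon (C : nat -> bool) : mon := fun i => nat_of_bool (C i).

Definition inG (m : nat) (u : mon) : Prop :=
  exists C, min_cover m C /\ meq u (cover_mon C).

Definition inF2 (m : nat) (M : mon) : Prop :=
  exists u v, [/\ inG m u, inG m v & meq M (mmul u v)].

Fixpoint rooted (m : nat) : seq mon :=
  match m with
  | 0 => [::]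
  | 1 => [::]
  | 2 => [:: xv 1; xv 2]
  | 3 => [:: xv 2; mmul (xv 1) (xv 3)]
  | 4 => [:: mmul (xv 1) (xv 3); mmul (xv 2) (xv 3); mmul (xv 2) (xv 4)]
  | S (S ((S ((S (S p)) as y)) as x)) =>
      (* here m = p+5, x = m-2, y = m-3 *)
      [seq mmul (xv p.+4) u | u <- rooted x] ++
      [seq mmul (mmul (xv p.+4.+1) (xv p.+3)) v | v <- rooted y]
  end.

Definition mexpr (R : seq mon) (a : seq nat) : mon :=
  fun j => \sum_(i < size R) nth 0 a i * (nth mone R i) j.

Definition is_expr (m : nat) (M : mon) (a : seq nat) : Prop :=
  [/\ size a = size (rooted m), sumn a = 2 & meq M (mexpr (rooted m) a)].

Fixpoint lexlt (a b : seq nat) : bool :=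
  match a, b with
  | x :: a', y :: b' => (x < y) || ((x == y) && lexlt a' b')
  | _, _ => false
  end.
Definition lexle (a b : seq nat) : bool := (a == b) || lexlt a b.

Definition is_max_expr (m : nat) (M : mon) (a : seq nat) : Prop :=
  is_expr m M a /\ forall b, is_expr m M b -> lexle b a.

Definition rgt (m : nat) (M N : mon) : Prop :=
  exists a b, [/\ is_max_expr m M a, is_max_expr m N b & lexlt b a].

(* Main.v *)
Require Import Defs.
From mathcomp Require Import all_boot.
From mathcomp Require Import zify.

Lemma mexpr_nil a j : mexpr [::] a j = 0.
Proof. by rewrite /mexpr big_ord0. Qed.

Lemma mexpr_cons u R a j :
  mexpr (u :: R) a j = nth 0 a 0 * u j + mexpr R (behead a) j.
Proof.
rewrite /mexpr /= big_ord_recl /= ; f_equal.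
by apply: eq_bigr => i _; case: a => [|x a] /=; rewrite ?nth_nil ?mul0n.
Qed.

Lemma mexpr_cat R1 R2 a j :
  mexpr (R1 ++ R2) a j = mexpr R1 a j + mexpr R2 (drop (size R1) a) j.
Proof.
elim: R1 a => [|u R1 IH] a /=; first by rewrite mexpr_nil drop0.
rewrite !mexpr_cons IH -addnA; congr (_ + (_ + _)).
by case: a.
Qed.

Lemma mexpr_map w R a j :
  mexpr [seq mmul w u | u <- R] a j = w j * sumn (take (size R) a) + mexpr R a j.
Proof.
elim: R a => [|u R IH] a /=; first by rewrite !mexpr_nil take0 /= muln0.
rewrite !mexpr_cons IH /mmul; case: a => [|x a] /=; first by lia.
lia.
Qed.

Lemma mexpr_take R a j : mexpr R a j = mexpr R (take (size R) a) j.
Proof.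
elim: R a => [|u R IH] a /=; first by rewrite !mexpr_nil.
by rewrite !mexpr_cons IH; case: a.
Qed.

Lemma mexpr_nseq0 R k j : mexpr R (nseq k 0) j = 0.
Proof.
rewrite /mexpr big1 // => i _; by rewrite nth_nseq if_same.
Qed.

Lemma xv_ne k j : k != j -> xv k j = 0.
Proof. by rewrite /xv eq_sym => /negbTE ->. Qed.

Lemma xv_gt k j : k < j -> xv k j = 0.
Proof. by move=> h; apply: xv_ne; rewrite neq_ltn h. Qed.

Lemma rooted_S5 p : rooted p.+4.+1 =
  [seq mmul (xv p.+4) u | u <- rooted p.+3] ++
  [seq mmul (mmul (xv p.+4.+1) (xv p.+3)) v | v <- rooted p.+2].
Proof. by []. Qed.

Lemma supp k m a j : m <= k -> m < j -> mexpr (rooted m) a j = 0.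
Proof.
elim: k m a j => [|k IH] m a j.
  by rewrite leqn0 => /eqP ->; rewrite mexpr_nil.
move=> hm hj.
case: m hm hj => [|[|[|[|[|p]]]]] hm hj.
- by rewrite mexpr_nil.
- by rewrite mexpr_nil.
- by rewrite /= !mexpr_cons mexpr_nil !xv_gt //; lia.
- by rewrite /= !mexpr_cons mexpr_nil /mmul !xv_gt //; lia.
- by rewrite /= !mexpr_cons mexpr_nil /mmul !xv_gt //; lia.
rewrite rooted_S5 mexpr_cat !mexpr_map /mmul !xv_gt //; try lia.
rewrite !IH //; lia.
Qed.

Lemma rooted_split n : 4 <= n -> exists R1 T, [/\ rooted n = R1 ++ T,
  size R1 = size (rooted (n-2)),
  (forall a j, mexpr R1 a j = xv n.-1 j * sumn (take (size (rooted (n-2))) a)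
      + mexpr (rooted (n-2)) a j) &
  (forall a, mexpr T a n.-1 = 0)].
Proof.
case: n => [|[|[|[|[|p]]]]] // _.
- exists [:: mmul (xv 1) (xv 3); mmul (xv 2) (xv 3)], [:: mmul (xv 2) (xv 4)].
  split => //.
  + move=> a j; rewrite /= !mexpr_cons !mexpr_nil /mmul.
    case: a => [|x [|y a]] /=; rewrite ?take0 /= ?mulnDr ?mulnDl ?muln0 ?addn0; lia.
  + by move=> a; rewrite !mexpr_cons mexpr_nil /mmul /xv /= muln0.
- rewrite rooted_S5.
  eexists; eexists; split; first reflexivity.
  + by rewrite size_map.
  + by move=> a j; rewrite mexpr_map.
  + move=> a; rewrite mexpr_map /mmul [_.-1]/= !xv_ne ?(@supp p.+2) //; lia.
Qed.

Definition mcc m (C : nat -> bool) := [/\ in_range m C, is_cover m C &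
  forall i, C i -> ((1 < i) && ~~ C i.-1) || ((i < m) && ~~ C i.+1)].

Lemma mc_iff m C : min_cover m C <-> mcc m C.
Proof.
split.
- case=> hr hc hmin; split => // i Ci.
  apply/negPn/negP => /negP hn.
  pose C' := fun k => C k && (k != i).
  have hr' : in_range m C' by move=> k /andP[/hr].
  have hc' : is_cover m C'.
    move=> k h1 h2; have := hc k h1 h2; rewrite /C'.
    case: (eqVneq k i) => [eki|hki].
      subst k; have hC : C i.+1 by apply/negPn/negP => hC; apply: hn; rewrite h2 hC orbT.
      by move=> _; rewrite hC andbF /= neq_ltn ltnSn orbT.
    case: (eqVneq k.+1 i) => [hk1|hk1].
      have hC : C k by apply/negPn/negP => hC; apply: hn; rewrite -hk1 /= ltnS h1 hC.
      by rewrite hC.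
    by rewrite !andbT.
  have := hmin C' hr' hc' (fun k => fun h => proj1 (andP h)) i Ci.
  by rewrite /C' eqxx andbF.
- case=> hr hc hpn; split => // C' hr' hc' hsub i Ci.
  apply/negPn/negP => /negP hn.
  have /andP[h1 h2] : 1 <= i <= m by apply: hr.
  have hn0 : C' i = false by apply/negP.
  case/orP: (hpn i Ci) => /andP[hi hC].
  + have := hc' i.-1; rewrite prednK ?(ltnW hi) //.
    have -> : C' i.-1 = false by apply/negP => /hsub; apply/negP.
    rewrite /= hn0 => H; suff: false by []; apply: H; lia.
  + have := hc' i h1 hi.
    have -> : C' i.+1 = false by apply/negP => /hsub; apply/negP.
    by rewrite hn0.
Qed.

Lemma notC_range m C i : in_range m C -> (i < 1) || (m < i) -> C i = false.
Proof. move=> hr h; apply/negP => /hr /andP[]; lia. Qed.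

Lemma mc_up n C : 4 <= n -> min_cover (n-2) C ->
  min_cover n (fun i => C i || (i == n.-1)).
Proof.
move=> hn /mc_iff [hr hc hp]; apply/mc_iff; split.
- move=> i /orP[/hr /andP[] | /eqP ->]; lia.
- move=> i h1 h2.
  case: (ltnP i (n-2)) => h3.
    by case/orP: (hc i h1 h3) => ->; rewrite ?orbT.
  case: (eqVneq i n.-1) => [->|hi]; first by rewrite ?eqxx ?orbT.
  have -> : i.+1 == n.-1 by apply/eqP; lia.
  by rewrite !orbT.
- move=> i /orP[Ci | /eqP ->].
  + have /andP[r1 r2] := hr i Ci.
    case/orP: (hp i Ci) => /andP[h1 h2].
    * apply/orP; left; rewrite h1 /= negb_or h2 /=; apply/negP => /eqP; lia.
    * apply/orP; right; apply/andP; split; first lia.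
      rewrite negb_or h2 /=; apply/negP => /eqP; lia.
  + apply/orP; right; apply/andP; split; first lia.
    rewrite prednK; last lia.
    rewrite (@notC_range (n-2) C n hr); last (apply/orP; right; lia).
    by rewrite /=; apply/negP => /eqP; lia.
Qed.

Lemma mc_down n C : 4 <= n -> min_cover n C -> C n.-1 ->
  C n = false /\ min_cover (n-2) (fun i => C i && (i < n.-1)).
Proof.
move=> hn /mc_iff [hr hc hp] Cn1.
have Cn : C n = false.
  apply/negP => Cn; have := hp n Cn; by rewrite ltnn andFb orbF Cn1 andbF.
split => //; apply/mc_iff; split.
- move=> i /andP[/hr /andP[]]; lia.
- move=> i h1 h2; have := hc i h1 (leq_trans h2 (leq_subr _ _)).
  have -> : i < n.-1 by lia.
  have -> : i.+1 < n.-1 by lia.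
  by rewrite !andbT.
- move=> i /andP[Ci hi].
  case/orP: (hp i Ci) => /andP[h1 h2].
  + by apply/orP; left; rewrite h1 /= negb_and h2.
  + have hi2 : i.+1 != n.-1 by apply/negP => /eqP e; move: h2; rewrite e Cn1.
    apply/orP; right; apply/andP; split; first lia.
    by rewrite negb_and h2.
Qed.

Lemma restr_eq n C i : 1 <= n -> min_cover n C -> C n = false -> i != n.-1 ->
  C i && (i < n.-1) = C i.
Proof.
move=> hn [hr _ _] Cn hi; case: (ltnP i n.-1) => h; rewrite ?andbT ?andbF //.
case: (eqVneq i n) => [->|hin]; first by rewrite Cn.
by rewrite (@notC_range n C i hr) //; apply/orP; right; lia.
Qed.

Definition x2 n (U : mon) := mmul (mmul (xv n.-1) (xv n.-1)) U.

Lemma inF2_iff n U : 4 <= n -> inF2 (n-2) U <-> inF2 n (x2 n U).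
Proof.
move=> hn; split.
- case=> u [v [[C1 [m1 e1]] [C2 [m2 e2]] e]].
  exists (cover_mon (fun i => C1 i || (i == n.-1))),
         (cover_mon (fun i => C2 i || (i == n.-1))); split.
  + by exists (fun i => C1 i || (i == n.-1)); split; [exact: (@mc_up n C1 hn m1) | move=> i].
  + by exists (fun i => C2 i || (i == n.-1)); split; [exact: (@mc_up n C2 hn m2) | move=> i].
  + move=> i; rewrite /x2 /mmul e /mmul e1 e2 /cover_mon.
    case: (eqVneq i n.-1) => [->|hi].
      have [r1 _ _] := m1; have [r2 _ _] := m2.
      rewrite (@notC_range (n-2) C1) ?(@notC_range (n-2) C2) /xv ?eqxx //;
        apply/orP; right; lia.
    by rewrite xv_ne 1?eq_sym // !orbF.
- case=> u [v [[C1 [m1 e1]] [C2 [m2 e2]] e]].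
  have := e n.-1; rewrite /x2 /mmul e1 e2 /cover_mon /xv eqxx /=.
  case E1: (C1 n.-1); case E2: (C2 n.-1) => /= h; try lia.
  have hU : U n.-1 = 0 by lia.
  have [Cn1 mc1] := @mc_down n C1 hn m1 E1.
  have [Cn2 mc2] := @mc_down n C2 hn m2 E2.
  exists (cover_mon (fun i => C1 i && (i < n.-1))),
         (cover_mon (fun i => C2 i && (i < n.-1))); split.
  + by exists (fun i => C1 i && (i < n.-1)); split; [exact: mc1 | move=> i].
  + by exists (fun i => C2 i && (i < n.-1)); split; [exact: mc2 | move=> i].
  + move=> i; rewrite /mmul /cover_mon.
    case: (eqVneq i n.-1) => [->|hi]; first by rewrite hU ltnn !andbF.
    have := e i; rewrite /x2 /mmul e1 e2 /cover_mon xv_ne 1?eq_sym //.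
    rewrite !restr_eq //; lia.
Qed.

Definition split_ok n R1 T := [/\ rooted n = R1 ++ T,
  size R1 = size (rooted (n-2)),
  (forall a j, mexpr R1 a j = xv n.-1 j * sumn (take (size (rooted (n-2))) a)
      + mexpr (rooted (n-2)) a j) &
  (forall a, mexpr T a n.-1 = 0)].

Lemma expr_up n R1 T U a : 4 <= n -> split_ok n R1 T ->
  is_expr (n-2) U a -> is_expr n (x2 n U) (a ++ nseq (size T) 0).
Proof.
move=> hn [hs hsz hR1 hT] [sa s2 me]; split.
- by rewrite hs !size_cat size_nseq hsz sa.
- by rewrite sumn_cat sumn_nseq mul0n addn0.
- move=> j; rewrite hs mexpr_cat hsz hR1 drop_size_cat // mexpr_nseq0.
  rewrite take_size_cat // (mexpr_take (rooted (n-2)) (a ++ _)) take_size_cat //.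
  rewrite /x2 /mmul me s2; lia.
Qed.

Lemma expr_down n R1 T U c : 4 <= n -> split_ok n R1 T ->
  is_expr n (x2 n U) c ->
  c = take (size (rooted (n-2))) c ++ nseq (size T) 0 /\
  is_expr (n-2) U (take (size (rooted (n-2))) c).
Proof.
move=> hn [hs hsz hR1 hT] [sc s2 me].
set r := size (rooted (n-2)) in hsz hR1 *.
have hc : c = take r c ++ drop r c by rewrite cat_take_drop.
have hev := me n.-1.
rewrite /x2 /mmul /xv eqxx /= hs mexpr_cat hsz hR1 hT in hev.
rewrite (@supp (n-2) (n-2) c n.-1 (leqnn _)) in hev; last lia.
rewrite /xv eqxx mul1n in hev.
rewrite hc sumn_cat in s2.
have hd0 : sumn (drop r c) == 0 by apply/eqP; lia.
have hst : sumn (take r c) = 2 by lia.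
have hsc : size c = r + size T by rewrite sc hs size_cat hsz.
have hd : drop r c = nseq (size T) 0.
  by rewrite (natnseq0P _ hd0) size_drop hsc addKn.
have szt : size (take r c) = r by rewrite size_takel // hsc leq_addr.
split; first by rewrite {1}hc hd.
split => //.
move=> j; have := me j.
rewrite /x2 /mmul hs mexpr_cat hsz hR1 hd mexpr_nseq0 hst.
rewrite (mexpr_take (rooted (n-2)) c) -/r; lia.
Qed.

Lemma lexlt_irr s : lexlt s s = false.
Proof. by elim: s => //= x s ->; rewrite ltnn eqxx. Qed.

Lemma lexlt_cat a b z : size a = size b -> lexlt (a ++ z) (b ++ z) = lexlt a b.
Proof.
elim: a b => [|x a IH] [|y b] //=; first by rewrite lexlt_irr.
by case=> /IH ->.
Qed.

Lemma lexle_cat a b z : size a = size b -> lexle (a ++ z) (b ++ z) = lexle a b.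
Proof. by move=> h; rewrite /lexle eqseq_cat // eqxx andbT lexlt_cat. Qed.

Lemma max_up n R1 T U a : 4 <= n -> split_ok n R1 T ->
  is_max_expr (n-2) U a -> is_max_expr n (x2 n U) (a ++ nseq (size T) 0).
Proof.
move=> hn sp [ea hmax]; split; first exact: (expr_up _ _ _ _ _ hn sp ea).
move=> b /(expr_down _ _ _ _ _ hn sp) [hb eb]; rewrite hb lexle_cat; first exact: hmax.
by case: eb => -> _ _; case: ea => -> _ _.
Qed.

Lemma max_down n R1 T U c : 4 <= n -> split_ok n R1 T ->
  is_max_expr n (x2 n U) c ->
  c = take (size (rooted (n-2))) c ++ nseq (size T) 0 /\
  is_max_expr (n-2) U (take (size (rooted (n-2))) c).
Proof.
move=> hn sp [ec hmax]; have [hc et] := expr_down _ _ _ _ _ hn sp ec; split => //.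
split => // b eb; have := hmax _ (expr_up _ _ _ _ _ hn sp eb).
rewrite [in X in lexle _ X -> _]hc lexle_cat //.
by case: eb => -> _ _; case: et => -> _ _.
Qed.

Theorem lemma3p3 (n : nat) (U V : mon) :
  4 <= n -> is_monomial U -> is_monomial V ->
  ((inF2 (n - 2) U /\ inF2 (n - 2) V) <->
   (inF2 n (mmul (mmul (xv n.-1) (xv n.-1)) U) /\
    inF2 n (mmul (mmul (xv n.-1) (xv n.-1)) V))) /\
  (inF2 (n - 2) U -> inF2 (n - 2) V ->
   (rgt (n - 2) U V <->
    rgt n (mmul (mmul (xv n.-1) (xv n.-1)) U) (mmul (mmul (xv n.-1) (xv n.-1)) V))).
Proof.
move=> hn _ _.
have [R1 [T [hs hsz hR1 hT]]] := rooted_split _ hn.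
have sp : split_ok n R1 T by split.
have HU := inF2_iff n U hn; have HV := inF2_iff n V hn.
split.
  by split=> [[/HU ? /HV ?]|[/HU ? /HV ?]]; split.
move=> _ _; split.
- case=> a [b [ma mb lt]].
  exists (a ++ nseq (size T) 0), (b ++ nseq (size T) 0); split.
  + exact: (max_up _ _ _ _ _ hn sp ma).
  + exact: (max_up _ _ _ _ _ hn sp mb).
  + rewrite lexlt_cat //.
    by case: ma => [[-> _ _] _]; case: mb => [[-> _ _] _].
- case=> c [d [mc md lt]].
  have [hc mc'] := max_down _ _ _ _ _ hn sp mc; have [hd md'] := max_down _ _ _ _ _ hn sp md.
  exists (take (size (rooted (n-2))) c), (take (size (rooted (n-2))) d); split => //.
  rewrite hc hd lexlt_cat in lt => //.
  by case: mc' => [[-> _ _] _]; case: md' => [[-> _ _] _].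
Qed.
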